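(* Let $\phi_{\mathrm p}$ be a Bregman kernel on $\mathbb R^n$ whose distance satisfies $d_{\mathrm p}(x,x')\ge\frac12\|x-x'\|^2$ (Euclidean norm), and $\phi_{\mathrm d}$ a Bregman kernel on $\mathbb R^m$ whose distance satisfies $d_{\mathrm d}(z,z')\ge\frac12\|z-z'\|_{\mathrm d}^2$ for a norm $\|\cdot\|_{\mathrm d}$. Let $A\in\mathbb R^{m\times n}$ with $\|A\|=\sup_{v\ne0}\|Av\|_{\mathrm d,*}/\|v\|$, where $\|\cdot\|_{\mathrm d,*}$ is the dual norm of $\|\cdot\|_{\mathrm d}$, and let $\sigma,\tau>0$ with $\sigma\tau\|A\|^2\le1$. Then the function \[\phi_{\mathrm{pd3o}}(x,y,z)=\frac1\tau\phi_{\mathrm p}(x)+\frac1\sigma\phi_{\mathrm d}(z)+\frac\tau2\|y\|^2-\langle y,x\rangle-\langle z,A(x-\tau y)\rangle\] (on $\operatorname{dom}\phi_{\mathrm p}\times\mathbb R^n\times\operatorname{dom}\phi_{\mathrm d}$) is convex; equivalently its Bregman distance \[d_{\mathrm{pd3o}}(x,y,z;x',y',z')=\tfrac1\tau d_{\mathrm p}(x,x')+\tfrac1\sigma d_{\mathrm d}(z,z')+\tfrac\tau2\|y-y'\|^2-\langle y-y',x-x'\rangle-\langle z-z',A(x-x')\rangle+\tau\langle z-z',A(y-y')\rangle\] is nonnegative.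
   Context: A Bregman kernel $\phi$ is convex with $\operatorname{int}(\operatorname{dom}\phi)\ne\emptyset$, continuous on $\operatorname{dom}\phi$ and continuously differentiable on $\operatorname{int}(\operatorname{dom}\phi)$; its distance is $d(x,y)=\phi(x)-\phi(y)-\langle\nabla\phi(y),x-y\rangle$ on $\operatorname{dom}\phi\times\operatorname{int}(\operatorname{dom}\phi)$. *)

(* Defs.v *)
From HB Require Import structures.
From mathcomp Require Import all_boot all_order all_algebra.
From mathcomp Require Import all_classical all_reals all_analysis.
Set Implicit Arguments. Unset Strict Implicit. Unset Printing Implicit Defensive.
Import Order.TTheory GRing.Theory Num.Theory.
Import numFieldNormedType.Exports.
Local Open Scope classical_set_scope.
Local Open Scope ring_scope.

Section Defs.
Variable R : realType.

Definition dotv (n : nat) (u v : 'cV[R]_n) : R := \sum_(i < n) u i 0 * v i 0.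

Definition enorm (n : nat) (v : 'cV[R]_n) : R := Num.sqrt (dotv v v).

Definition grad (n : nat) (phi : 'cV[R]_n -> R) (y : 'cV[R]_n) : 'cV[R]_n :=
  \col_(i < n) ('d phi y : 'cV[R]_n -> R) (delta_mx i 0).

Definition convex_set (n : nat) (D : set 'cV[R]_n) : Prop :=
  forall x y (t : R), D x -> D y -> 0 <= t <= 1 -> D (t *: x + (1 - t) *: y).

Definition convex_fun_on (n : nat) (D : set 'cV[R]_n) (f : 'cV[R]_n -> R) : Prop :=
  convex_set D /\
  forall x y (t : R), D x -> D y -> 0 <= t <= 1 ->
    f (t *: x + (1 - t) *: y) <= t * f x + (1 - t) * f y.

(* Bregman kernel with domain D (dom phi = D, phi real-valued on D) *)
Definition bregman_kernel (n : nat) (D : set 'cV[R]_n) (phi : 'cV[R]_n -> R) : Prop :=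
  [/\ convex_fun_on D phi,
      D° !=set0,
      {within D, continuous phi},
      (forall x, D° x -> differentiable phi x) &
      {within D°, continuous (grad phi)}].

(* Bregman distance d(x,y), meaningful for x in D, y in int D *)
Definition bregman_dist (n : nat) (phi : 'cV[R]_n -> R) (x y : 'cV[R]_n) : R :=
  phi x - phi y - dotv (grad phi y) (x - y).

Definition is_norm (m : nat) (N : 'cV[R]_m -> R) : Prop :=
  [/\ forall x, N x = 0 -> x = 0,
      forall (a : R) x, N (a *: x) = `|a| * N x &
      forall x y, N (x + y) <= N x + N y].

Definition dual_norm (m : nat) (N : 'cV[R]_m -> R) (u : 'cV[R]_m) : R :=
  sup [set dotv u z | z in [set z | N z <= 1]].

Definition op_norm (m n : nat) (N : 'cV[R]_m -> R) (A : 'M[R]_(m, n)) : R :=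
  sup [set dual_norm N (A *m v) / enorm v | v in [set v : 'cV[R]_n | v != 0]].

Definition convex3_on (n1 n2 n3 : nat) (D1 : set 'cV[R]_n1) (D2 : set 'cV[R]_n2)
    (D3 : set 'cV[R]_n3) (f : 'cV[R]_n1 -> 'cV[R]_n2 -> 'cV[R]_n3 -> R) : Prop :=
  forall x y z x' y' z' (t : R), D1 x -> D2 y -> D3 z -> D1 x' -> D2 y' -> D3 z' ->
    0 <= t <= 1 ->
    f (t *: x + (1 - t) *: x') (t *: y + (1 - t) *: y') (t *: z + (1 - t) *: z')
      <= t * f x y z + (1 - t) * f x' y' z'.

End Defs.

(* Main.v *)
Require Import Defs.
From HB Require Import structures.
From mathcomp Require Import all_boot all_order all_algebra.
From mathcomp Require Import all_classical all_reals all_analysis.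
From mathcomp Require Import ring lra.
Import Order.TTheory GRing.Theory Num.Theory.
Import numFieldNormedType.Exports.
Local Open Scope classical_set_scope.
Local Open Scope ring_scope.

Section Norms.
Local Set Implicit Arguments. Local Unset Strict Implicit.
Variable R : realType.

Definition normlike (p q : nat) (N : 'M[R]_(p, q) -> R) :=
  (forall (a : R) x, N (a *: x) = `|a| * N x) /\ (forall x y, N (x + y) <= N x + N y).

Lemma nl0 p q N : @normlike p q N -> N 0 = 0.
Proof. by case=> hZ _; rewrite -(scale0r (0 : 'M[R]_(p,q))) hZ normr0 mul0r. Qed.

Lemma nlN p q N : @normlike p q N -> forall x, N (- x) = N x.
Proof. by case=> hZ _ x; rewrite -scaleN1r hZ normrN normr1 mul1r. Qed.

Lemma nl_ge0 p q N : @normlike p q N -> forall x, 0 <= N x.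
Proof.
move=> hN x; have := hN.2 x (- x); rewrite subrr nl0 // nlN //.
lra.
Qed.

Lemma nl_sum p q N (I : finType) (F : I -> 'M[R]_(p,q)) : @normlike p q N ->
  N (\sum_i F i) <= \sum_i N (F i).
Proof.
move=> hN; elim/big_rec2: _ => [|i y1 y2 _ h]; first by rewrite nl0.
apply: le_trans (hN.2 _ _) _; lra.
Qed.

Lemma entry_le_norm p q (x : 'M[R]_(p,q)) i j : `|x i j| <= `|x|.
Proof.
rewrite [leRHS]/Num.norm /= mx_normrE.
by apply/bigmax_geP; right => /=; exists (i, j).
Qed.

Lemma nl_ub p q N : @normlike p q N -> forall x,
  N x <= `|x| * \sum_(ij : 'I_p * 'I_q) N (delta_mx ij.1 ij.2).
Proof.
move=> hN x.
have e : x = \sum_(ij : 'I_p * 'I_q) x ij.1 ij.2 *: delta_mx ij.1 ij.2.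
  rewrite {1}(matrix_sum_delta x) pair_bigA /=; done.
rewrite {1}e.
apply: le_trans (nl_sum _ hN) _.
rewrite mulr_sumr; apply: ler_sum => ij _.
rewrite hN.1; apply: ler_wpM2r; first exact: nl_ge0.
exact: entry_le_norm.
Qed.

Lemma nl_cont p q N : @normlike p q N -> continuous N.
Proof.
move=> hN x; have FF : Filter (nbhs x) by exact: nbhs_filter.
apply/(@cvgrPdist_le _ _ _ (nbhs x) FF) => e e0.
set C := \sum_(ij : 'I_p * 'I_q) N (delta_mx ij.1 ij.2).
have C0 : 0 <= C by apply: sumr_ge0 => ij _; exact: nl_ge0.
near=> y.
have h1 : N x <= N y + N (x - y) by have := hN.2 y (x - y); rewrite subrKC.
have h2 : N y <= N x + N (y - x) by have := hN.2 x (y - x); rewrite subrKC.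
have h3 : N (x - y) <= `|x - y| * C by exact: nl_ub.
have h4 : N (y - x) = N (x - y) by rewrite -opprB nlN.
have h5 : `|x - y| * C <= e.
  near: y. 
  have [->|Cn0] := eqVneq C 0.
    by apply: nearW => y; rewrite mulr0 ltW.
  have Cp : 0 < C by rewrite lt0r Cn0.
  apply/(@nbhs_normP _ ('M[R]_(p,q) : normedZmodType R)); exists (e / C); first by apply: divr_gt0.
  move=> y /= hy; rewrite -ler_pdivlMr //; exact: ltW.
rewrite ler_norml; apply/andP; split; lra.
Unshelve. all: by end_near. Qed.


Lemma nl_lower m (N : 'cV[R]_m -> R) : is_norm N ->
  exists mu, 0 < mu /\ forall (v : 'cV[R]_m) i, mu * `|v i 0| <= N v.
Proof.
case=> N0 NZ ND.
have hN : normlike N by split.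
case: m N N0 NZ ND hN => [|k] N N0 NZ ND hN.
  by exists 1; split => // v [].
pose f (r : 'rV[R]_k.+1) := N r^T.
have hf : normlike f.
  split=> [a x|x y]; rewrite /f; first by rewrite linearZ /= NZ.
  by rewrite linearD /= ND.
pose A := [set r : 'rV[R]_k.+1 | `|r| = 1].
have A0 : A !=set0.
  pose d : 'rV[R]_k.+1 := delta_mx 0 0.
  have dn0 : d != 0.
    apply/eqP => /matrixP /(_ 0 0); rewrite !mxE /=.
    by move/eqP; rewrite oner_eq0.
  exists (`|d|^-1 *: d); rewrite /A /= normrZ ger0_norm ?invr_ge0 //.
  by rewrite mulVf // normr_eq0.
have cA : compact A.
  apply: bounded_closed_compact.
    rewrite /= /bounded_near; near=> M => r /= ->.
    near: M; exact: nbhs_pinfty_ge.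
  have -> : A = (fun r : 'rV[R]_k.+1 => `|r|) @^-1` [set x | x = 1] by [].
  apply: preimage_closed; last exact: closed_eq.
  move=> x _; exact: norm_continuous.
have cf : {within A, continuous f} by apply: continuous_subspaceT; exact: nl_cont.
have [c cA' cmin] := compact_EVT_min A0 cA cf.
have c1 : `|c| = 1 by move: cA'; rewrite inE.
exists (f c); split.
  rewrite lt0r nl_ge0 // andbT; apply/eqP => /N0 /eqP; rewrite trmx_eq0 => /eqP c0.
  by move: c1; rewrite c0 normr0 => /eqP; rewrite eq_sym oner_eq0.
move=> v i.
have [r0|rn0] := eqVneq v^T 0.
  have -> : v = 0 by apply: trmx_inj; rewrite r0 trmx0.
  by rewrite mxE normr0 mulr0 nl_ge0.
have rp : 0 < `|v^T| by rewrite normr_gt0.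
have h1 : f c <= f (`|v^T|^-1 *: v^T).
  apply: cmin; rewrite inE /A /= normrZ ger0_norm ?invr_ge0 //.
  by rewrite mulVf // gt_eqF.
rewrite hf.1 ger0_norm ?invr_ge0 // in h1.
have h2 : `|v i 0| <= `|v^T| by have := entry_le_norm v^T 0 i; rewrite mxE.
have h3 : f c * `|v^T| <= f v^T by rewrite -ler_pdivlMr // mulrC.
rewrite /f trmxK in h3.
apply: le_trans h3; apply: ler_wpM2l => //; exact: nl_ge0.
Unshelve. all: by end_near. Qed.

End Norms.

Section Dot.
Local Set Implicit Arguments. Local Unset Strict Implicit.
Variable R : realType.
Variable k : nat.
Implicit Types u v w : 'cV[R]_k.

Lemma dotvC u v : dotv u v = dotv v u.
Proof. by rewrite /dotv; apply: eq_bigr => i _; rewrite mulrC. Qed.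

Lemma dotvDr u v w : dotv u (v + w) = dotv u v + dotv u w.
Proof. by rewrite /dotv -big_split; apply: eq_bigr => i _; rewrite mxE mulrDr. Qed.

Lemma dotvZr u a v : dotv u (a *: v) = a * dotv u v.
Proof. by rewrite /dotv mulr_sumr; apply: eq_bigr => i _; rewrite mxE mulrCA. Qed.

Lemma dotvDl u v w : dotv (v + w) u = dotv v u + dotv w u.
Proof. by rewrite dotvC dotvDr !(dotvC u). Qed.

Lemma dotvZl u a v : dotv (a *: v) u = a * dotv v u.
Proof. by rewrite dotvC dotvZr dotvC. Qed.

Lemma dotvNr u v : dotv u (- v) = - dotv u v.
Proof. by rewrite -scaleN1r dotvZr mulN1r. Qed.

Lemma dotvNl u v : dotv (- v) u = - dotv v u.
Proof. by rewrite dotvC dotvNr dotvC. Qed.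

Lemma dotvBr u v w : dotv u (v - w) = dotv u v - dotv u w.
Proof. by rewrite dotvDr dotvNr. Qed.

Lemma dotvBl u v w : dotv (v - w) u = dotv v u - dotv w u.
Proof. by rewrite dotvDl dotvNl. Qed.

Lemma dotv0r u : dotv u 0 = 0.
Proof. by rewrite /dotv big1 // => i _; rewrite mxE mulr0. Qed.

Lemma dotv_ge0 v : 0 <= dotv v v.
Proof. by apply: sumr_ge0 => i _; rewrite -expr2 sqr_ge0. Qed.

Lemma enorm_sq v : enorm v ^+ 2 = dotv v v.
Proof. by rewrite /enorm sqr_sqrtr // dotv_ge0. Qed.

Lemma enorm_ge0 v : 0 <= enorm v.
Proof. exact: sqrtr_ge0. Qed.

Lemma enormZ a v : enorm (a *: v) = `|a| * enorm v.
Proof.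
by rewrite /enorm dotvZl dotvZr mulrA -expr2 sqrtrM ?sqr_ge0 // sqrtr_sqr.
Qed.

Lemma entry_le_enorm v i : `|v i 0| <= enorm v.
Proof.
rewrite -(sqrtr_sqr (v i 0)) /enorm; apply: ler_wsqrtr.
rewrite /dotv (bigD1 i) //= -expr2 lerDl.
by apply: sumr_ge0 => j _; rewrite -expr2 sqr_ge0.
Qed.

Lemma enorm_gt0 v : v != 0 -> 0 < enorm v.
Proof.
move=> vn0; have [i hi] : exists i, v i 0 != 0.
  apply/existsP; move: vn0; apply: contraR; rewrite negb_exists => /forallP h.
  apply/eqP/matrixP => a b; rewrite (ord1 b) mxE.
  by have := h a; rewrite negbK => /eqP.
apply: lt_le_trans (entry_le_enorm v i); by rewrite normr_gt0.
Qed.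

End Dot.

Section Dual.
Local Set Implicit Arguments. Local Unset Strict Implicit.
Variable R : realType.
Variables (m n : nat) (N : 'cV[R]_m -> R) (hN : is_norm N).
Variables (mu : R) (mu0 : 0 < mu) (hmu : forall (v : 'cV[R]_m) i, mu * `|v i 0| <= N v).

Let hNl : normlike N.
Proof. by case: hN => _ ? ?; split. Qed.

Lemma dot_bound u z : N z <= 1 -> dotv u z <= mu^-1 * \sum_i `|u i 0|.
Proof.
move=> Nz; rewrite /dotv mulr_sumr; apply: ler_sum => i _.
apply: le_trans (ler_norm _) _; rewrite normrM mulrC; apply: ler_wpM2r => //.
rewrite -(ler_pM2l mu0) mulfV ?gt_eqF //; exact: le_trans (hmu z i) Nz.
Qed.

Let S u := [set dotv u z | z in [set z | N z <= 1]].

Lemma S_sup u : has_sup (S u).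
Proof.
split; first by exists (dotv u 0), 0 => //=; rewrite nl0.
exists (mu^-1 * \sum_i `|u i 0|) => _ [z /= Nz <-]; exact: dot_bound.
Qed.

Lemma dual_ge u z : N z <= 1 -> dotv u z <= dual_norm N u.
Proof. by move=> Nz; apply: ub_le_sup (S_sup u).2 _ _; exists z. Qed.

Lemma dual_le u : dual_norm N u <= mu^-1 * \sum_i `|u i 0|.
Proof. by apply: ge_sup (S_sup u).1 _ => _ [z /= Nz <-]; exact: dot_bound. Qed.

Lemma holder c u : dotv c u <= N c * dual_norm N u.
Proof.
have [->|cn0] := eqVneq c 0.
  by rewrite dotvC dotv0r nl0 // mul0r.
have Np : 0 < N c.
  rewrite lt0r nl_ge0 // andbT; apply: contra cn0 => /eqP; case: hN => h _ _.
  by move/h => ->.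
have h1 : N ((N c)^-1 *: c) <= 1.
  by rewrite hNl.1 ger0_norm ?invr_ge0 ?(ltW Np) // mulVf ?gt_eqF.
have := dual_ge u h1; rewrite dotvZr dotvC => h.
by rewrite -ler_pdivrMl // mulrC.
Qed.

Variable A : 'M[R]_(m, n).

Lemma dual_A v : dual_norm N (A *m v) <=
  (mu^-1 * \sum_i \sum_j `|A i j|) * enorm v.
Proof.
apply: le_trans (dual_le _) _; rewrite -mulrA; apply: ler_wpM2l; first by rewrite invr_ge0 ltW.
rewrite mulr_suml; apply: ler_sum => i _; rewrite mxE.
apply: le_trans (ler_norm_sum _ _ _) _; rewrite mulr_suml; apply: ler_sum => j _.
by rewrite normrM; apply: ler_wpM2l => //; exact: entry_le_enorm.
Qed.

Lemma op_bound w : dual_norm N (A *m w) <= op_norm N A * enorm w.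
Proof.
have [->|wn0] := eqVneq w 0.
  apply: le_trans (dual_A 0) _.
  by have := enormZ 0 (0 : 'cV[R]_n); rewrite scale0r normr0 mul0r => ->; rewrite !mulr0.
have ep := enorm_gt0 wn0.
rewrite -ler_pdivrMr //; apply: ub_le_sup; last by exists w.
exists (mu^-1 * \sum_i \sum_j `|A i j|) => _ [v /= vn0 <-].
rewrite ler_pdivrMr ?enorm_gt0 //; exact: dual_A.
Qed.

End Dual.
Lemma real_key (R : realType) (s t L X Y : R) : 0 < s -> 0 < t -> s * t * L ^+ 2 <= 1 ->
  0 <= X -> X * (L * Y) <= t^-1 / 2 * Y ^+ 2 + s^-1 / 2 * X ^+ 2.
Proof.
move=> s0 t0 h X0.
have es : s^-1 * s = 1 by rewrite mulVf ?gt_eqF.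
have et : t^-1 * t = 1 by rewrite mulVf ?gt_eqF.
have h1 : 0 <= s^-1 * (X - s * L * Y) ^+ 2.
  by apply: mulr_ge0; [rewrite invr_ge0; exact: ltW | exact: sqr_ge0].
have h2 : 0 <= t^-1 - s * L ^+ 2.
  by rewrite subr_ge0 -(ler_pM2l t0) mulfV ?gt_eqF // mulrA (mulrC t s).
have h3 : 0 <= Y ^+ 2 * (t^-1 - s * L ^+ 2) by apply: mulr_ge0 => //; exact: sqr_ge0.
have e : s^-1 * (X - s * L * Y) ^+ 2 = s^-1 * X ^+ 2 - 2 * (s^-1 * s) * (X * (L * Y)) + (s^-1 * s) * s * L ^+ 2 * Y ^+ 2 by ring.
rewrite es in e.
lra.
Qed.

Lemma key (R : realType) (n m : nat) (N : 'cV[R]_m -> R) (A : 'M[R]_(m, n))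
  (sigma tau : R) : is_norm N -> 0 < sigma -> 0 < tau ->
  sigma * tau * op_norm N A ^+ 2 <= 1 ->
  forall (a b : 'cV[R]_n) (c : 'cV[R]_m),
  0 <= tau^-1 * (2^-1 * enorm a ^+ 2) + sigma^-1 * (2^-1 * N c ^+ 2)
       + tau / 2 * enorm b ^+ 2 - dotv b a - dotv c (A *m a)
       + tau * dotv c (A *m b).
Proof.
move=> hN s0 t0 hst a b c.
have [mu [mu0 hmu]] := nl_lower hN.
have hNl : normlike N by case: hN => _ ? ?; split.
set w := a - tau *: b.
have E1 : enorm w ^+ 2 = dotv a a - 2 * tau * dotv a b + tau ^+ 2 * dotv b b.
  rewrite enorm_sq /w !dotvBl !dotvBr !dotvZl !dotvZr (dotvC b a); ring.
have E2 : dotv c (A *m w) = dotv c (A *m a) - tau * dotv c (A *m b).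
  by rewrite /w mulmxBr -scalemxAr dotvBr dotvZr.
have H1 : dotv c (A *m w) <= N c * (op_norm N A * enorm w).
  apply: le_trans (holder hN mu0 hmu c (A *m w)) _.
  apply: ler_wpM2l; first exact: nl_ge0.
  exact: (op_bound hN mu0 hmu A w).
have H2 := @real_key R sigma tau (op_norm N A) (N c) (enorm w) s0 t0 hst (nl_ge0 hNl c).
rewrite E1 in H2; rewrite E2 in H1.
rewrite !enorm_sq (dotvC b a).
have et : tau^-1 * tau = 1 by rewrite mulVf ?gt_eqF.
have e3 : tau^-1 / 2 * (dotv a a - 2 * tau * dotv a b + tau ^+ 2 * dotv b b)
  = tau^-1 / 2 * dotv a a - (tau^-1 * tau) * dotv a b + (tau^-1 * tau) * tau / 2 * dotv b b.
  by move: (dotv a a) (dotv a b) (dotv b b) (tau^-1) => x y z ti; by field.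
rewrite e3 et in H2.
lra.
Qed.

Section SC.
Local Set Implicit Arguments. Local Unset Strict Implicit.
Variable R : realType.
Variable k : nat.
Variables (D : set 'cV[R]_k) (phi : 'cV[R]_k -> R) (M : 'cV[R]_k -> R).
Hypothesis hM : forall (a : R) v, M (a *: v) = `|a| * M v.
Hypothesis hB : forall x x', D x -> D° x' ->
  2^-1 * M (x - x') ^+ 2 <= bregman_dist phi x x'.
Hypothesis hconv : Defs.convex_set D.

Lemma sc_int x x' t : D x -> D x' -> 0 <= t <= 1 -> D° (t *: x + (1 - t) *: x') ->
  phi (t *: x + (1 - t) *: x') <= t * phi x + (1 - t) * phi x'
     - t * (1 - t) / 2 * M (x - x') ^+ 2.
Proof.
move=> Dx Dx' /andP[t0 t1] Dp.
set p := t *: x + (1 - t) *: x'.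
have h1 := hB Dx Dp; have h2 := hB Dx' Dp.
have e1 : x - p = (1 - t) *: (x - x').
  by apply/matrixP => i j; rewrite !mxE; ring.
have e2 : x' - p = (- t) *: (x - x').
  by apply/matrixP => i j; rewrite !mxE; ring.
rewrite /bregman_dist e1 e2 !hM !dotvZr normrN in h1 h2.
rewrite ger0_norm in h1; last lra.
rewrite ger0_norm in h2; last lra.
set G := dotv _ _ in h1 h2.
set m := M (x - x') in h1 h2 *.
have h1' := ler_wpM2l t0 h1.
have h2' : (1 - t) * (2^-1 * (t * m) ^+ 2) <= (1 - t) * (phi x' - phi p - - t * G).
  by apply: ler_wpM2l => //; lra.
have e3 : t * (2^-1 * ((1 - t) * m) ^+ 2) + (1 - t) * (2^-1 * (t * m) ^+ 2)
   = t * (1 - t) / 2 * m ^+ 2 by field.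
have e4 : t * (phi x - phi p - (1 - t) * G) + (1 - t) * (phi x' - phi p - - t * G)
   = t * phi x + (1 - t) * phi x' - phi p by ring.
lra.
Qed.


Lemma conv_pt u v s : D u -> D v -> 0 <= s <= 1 -> D ((1 - s) *: u + s *: v).
Proof.
move=> Du Dv /andP[s0 s1].
have := @hconv u v (1 - s) Du Dv; rewrite (_ : 1 - (1 - s) = s); last by ring.
apply.
apply/andP; split; lra.
Qed.

Lemma interior_seg x0 u s : D° x0 -> D u -> 0 < s <= 1 ->
  D° ((1 - s) *: u + s *: x0).
Proof.
move=> Dx0 Du /andP[s0 s1].
have Dx0' := Dx0.
move: Dx0' => /(@nbhs_normP _ ('cV[R]_k : normedZmodType R)) [r r0 hr].
rewrite /interior /=.
apply/(@nbhs_normP _ ('cV[R]_k : normedZmodType R)).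
exists (s * r); first exact: mulr_gt0.
move=> y /= hy.
set p := (1 - s) *: u + s *: x0 in hy *.
pose w := s^-1 *: (y - (1 - s) *: u).
have sn0 : s != 0 by rewrite gt_eqF.
have e1 : x0 - w = s^-1 *: (p - y).
  by apply/matrixP => i j; rewrite !mxE; field.
have Dw : D w.
  apply: hr => /=; rewrite e1 normrZ ger0_norm ?invr_ge0 ?(ltW s0) //.
  by rewrite ltr_pdivrMl // .
have e2 : y = s *: w + (1 - s) *: u.
  by apply/matrixP => i j; rewrite !mxE; field.
rewrite e2; apply: hconv => //; apply/andP; split; lra.
Qed.


Lemma seg_cvg (x0 u : 'cV[R]_k) :
  (fun s : R => (1 - s) *: u + s *: x0) @ 0^'+ --> u.
Proof.
apply: cvg_at_right_filter.
have h : (fun s : R => (1 - s) *: u + s *: x0) @ 0 --> (1 - 0) *: u + 0 *: x0.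
  apply: cvgD; apply: cvgZr_tmp; last exact: cvg_id.
  apply: cvgB; [exact: cvg_cst | exact: cvg_id].
by rewrite subr0 scale1r scale0r addr0 in h.
Qed.

Lemma lim_phi x0 u : {within D, continuous phi} -> D° x0 -> D u ->
  (fun s => phi ((1 - s) *: u + s *: x0)) @ 0^'+ --> phi u.
Proof.
move=> hcont Dx0 Du.
have hc : from_subspace D phi @ within D (nbhs u) --> phi u.
  move: (hcont u); rewrite /continuous_at.
  case: (nbhs_subspaceP D u) => //=.
have -> : (fun s => phi ((1 - s) *: u + s *: x0)) =
  (from_subspace D phi) \o (fun s => (1 - s) *: u + s *: x0) by [].
apply: cvg_comp hc.
move=> P /= hP.
have := @seg_cvg x0 u _ hP.
move=> h1 /=.
have h2 : \forall s \near 0^'+, D ((1 - s) *: u + s *: x0).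
  near=> s; apply: conv_pt => //.
    exact: interior_subset.
  apply/andP; split.
    by apply: ltW; near: s; exact: nbhs_right_gt.
  by near: s; apply: nbhs_right_le; exact: ltr01.
move: h2 h1; apply: filterS2 => s hD h; exact: h hD.
Unshelve. all: by end_near. Qed.


Lemma sc x0 : {within D, continuous phi} -> D° x0 ->
  forall x x' t, D x -> D x' -> 0 <= t <= 1 ->
  phi (t *: x + (1 - t) *: x') <= t * phi x + (1 - t) * phi x'
     - t * (1 - t) / 2 * M (x - x') ^+ 2.
Proof.
move=> hcont Dx0 x x' t Dx Dx' t01.
set p := t *: x + (1 - t) *: x'.
have Dp : D p by apply: hconv.
pose l u (s : R) := (1 - s) *: u + s *: x0.
set m := M (x - x').
pose h s := t * phi (l x s) + (1 - t) * phi (l x' s)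
   - t * (1 - t) / 2 * ((1 - s) * (1 - s) * m ^+ 2) - phi (l p s).
have hlim : h @ 0^'+ --> t * phi x + (1 - t) * phi x'
   - t * (1 - t) / 2 * ((1 - 0) * (1 - 0) * m ^+ 2) - phi p.
  apply: cvgB; last exact: lim_phi.
  apply: cvgB.
    apply: cvgD; apply: cvgMl_tmp; exact: lim_phi.
  apply: cvgMl_tmp; apply: cvgMr_tmp; apply: cvg_at_right_filter.
  by apply: cvgM; apply: cvgB; [exact: cvg_cst | exact: cvg_id | exact: cvg_cst | exact: cvg_id].
have hev : \forall s \near 0^'+, 0 <= h s.
  near=> s.
  have s0 : 0 < s by near: s; exact: nbhs_right_gt.
  have s1 : s <= 1 by near: s; apply: nbhs_right_le; exact: ltr01.
  have s01 : 0 <= s <= 1 by rewrite (ltW s0) s1.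
  have Dx0' : D x0 by exact: interior_subset.
  have Dlx := conv_pt Dx Dx0' s01.
  have Dlx' := conv_pt Dx' Dx0' s01.
  have elp : l p s = t *: l x s + (1 - t) *: l x' s.
    by apply/matrixP => i j; rewrite !mxE; ring.
  have Dint : D° (l p s).
    by apply: interior_seg => //; rewrite s0 s1.
  rewrite elp in Dint.
  have := sc_int Dlx Dlx' t01 Dint.
  have ed : l x s - l x' s = (1 - s) *: (x - x').
    by apply/matrixP => i j; rewrite !mxE; ring.
  rewrite ed hM ger0_norm ?subr_ge0 // -elp /h -/m => H.
  have e : ((1 - s) * m) ^+ 2 = (1 - s) * (1 - s) * m ^+ 2 by ring.
  rewrite e in H; lra.
have cl : closed [set r : R | 0 <= r] by exact: closed_ge.
have := closed_cvg _ cl hev _ hlim.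
rewrite /= subr0 !mul1r => H; have := H (at_right_proper_filter 0); lra.
Unshelve. all: by end_near. Qed.

End SC.

Section Bil.
Local Set Implicit Arguments. Local Unset Strict Implicit.
Variable R : realType.

Lemma bil_id p q (B : 'cV[R]_p -> 'cV[R]_q -> R)
  (BDl : forall a1 a2 b, B (a1 + a2) b = B a1 b + B a2 b)
  (BZl : forall (c : R) a b, B (c *: a) b = c * B a b)
  (BDr : forall a b1 b2, B a (b1 + b2) = B a b1 + B a b2)
  (BZr : forall (c : R) a b, B a (c *: b) = c * B a b)
  a a' b b' (t : R) :
  t * B a b + (1 - t) * B a' b' - B (t *: a + (1 - t) *: a') (t *: b + (1 - t) *: b')
  = t * (1 - t) * B (a - a') (b - b').
Proof.
have BNl : forall a b, B (- a) b = - B a b.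
  by move=> a1 b1; rewrite -scaleN1r BZl mulN1r.
have BNr : forall a b, B a (- b) = - B a b.
  by move=> a1 b1; rewrite -scaleN1r BZr mulN1r.
rewrite !BDl !BZl !BDr !BZr !BNl !BNr; ring.
Qed.

Lemma dotAw n m (A : 'M[R]_(m, n)) (z : 'cV[R]_m) x y (tau : R) :
  dotv z (A *m (x - tau *: y)) = dotv z (A *m x) - tau * dotv z (A *m y).
Proof. by rewrite mulmxBr -scalemxAr dotvBr dotvZr. Qed.

End Bil.

Theorem mainTheorem7 (R : realType) (n m : nat)
    (Dp : set 'cV[R]_n) (phip : 'cV[R]_n -> R)
    (Dd : set 'cV[R]_m) (phid : 'cV[R]_m -> R)
    (Nd : 'cV[R]_m -> R) (A : 'M[R]_(m, n)) (sigma tau : R) :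
  bregman_kernel Dp phip ->
  (forall x x', Dp x -> Dp° x' ->
     bregman_dist phip x x' >= 2^-1 * enorm (x - x') ^+ 2) ->
  bregman_kernel Dd phid ->
  is_norm Nd ->
  (forall z z', Dd z -> Dd° z' ->
     bregman_dist phid z z' >= 2^-1 * Nd (z - z') ^+ 2) ->
  0 < sigma -> 0 < tau ->
  sigma * tau * op_norm Nd A ^+ 2 <= 1 ->
  convex3_on Dp [set: 'cV[R]_n] Dd
    (fun x y z => tau^-1 * phip x + sigma^-1 * phid z + tau / 2 * enorm y ^+ 2
                  - dotv y x - dotv z (A *m (x - tau *: y)))
  /\
  (forall x y z x' y' z', Dp x -> Dp° x' -> Dd z -> Dd° z' ->
     0 <= tau^-1 * bregman_dist phip x x' + sigma^-1 * bregman_dist phid z z'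
          + tau / 2 * enorm (y - y') ^+ 2 - dotv (y - y') (x - x')
          - dotv (z - z') (A *m (x - x')) + tau * dotv (z - z') (A *m (y - y'))).
Proof.
move=> [[cvp _] [xp0 Dxp0] cp _ _] hBp [[cvd _] [zd0 Dzd0] cd _ _] hN hBd s0 t0 hst.
have hK := @key R n m Nd A sigma tau hN s0 t0 hst.
have ti0 : 0 <= tau^-1 by rewrite invr_ge0 ltW.
have si0 : 0 <= sigma^-1 by rewrite invr_ge0 ltW.
split; last first.
  move=> x y z x' y' z' Dx Dx' Dz Dz'.
  have h1 := ler_wpM2l ti0 (hBp x x' Dx Dx').
  have h2 := ler_wpM2l si0 (hBd z z' Dz Dz').
  have h3 := hK (x - x') (y - y') (z - z').
  lra.
move=> x y z x' y' z' t Dx _ Dz Dx' _ Dz' t01.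
have hNZ : forall (a : R) v, Nd (a *: v) = `|a| * Nd v by case: hN.
have scp := sc (@enormZ R n) hBp cvp cp Dxp0 Dx Dx' t01.
have scd := sc hNZ hBd cvd cd Dzd0 Dz Dz' t01.
have t0' : 0 <= t by case/andP: t01.
have t1' : 0 <= 1 - t by case/andP: t01 => _ ?; lra.
have h1 := ler_wpM2l ti0 scp.
have h2 := ler_wpM2l si0 scd.
have h3 := mulr_ge0 (mulr_ge0 t0' t1') (hK (x - x') (y - y') (z - z')).
rewrite !dotAw !enorm_sq.
have i1 := bil_id (fun a1 a2 b => @dotvDl R n b a1 a2) (fun c a b => @dotvZl R n b c a) (@dotvDr R n) (fun c a b => @dotvZr R n a c b) y y' y y' t.
have i2 := bil_id (fun a1 a2 b => @dotvDl R n b a1 a2) (fun c a b => @dotvZl R n b c a) (@dotvDr R n) (fun c a b => @dotvZr R n a c b) y y' x x' t.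
have i3 := bil_id (B := fun z x => dotv z (A *m x))
  (fun a1 a2 b => dotvDl _ a1 a2) (fun c a b => dotvZl _ c a)
  (fun a b1 b2 => ltac:(by rewrite /= mulmxDr dotvDr))
  (fun c a b => ltac:(by rewrite /= -scalemxAr dotvZr)) z z' x x' t.
have i4 := bil_id (B := fun z x => dotv z (A *m x))
  (fun a1 a2 b => dotvDl _ a1 a2) (fun c a b => dotvZl _ c a)
  (fun a b1 b2 => ltac:(by rewrite /= mulmxDr dotvDr))
  (fun c a b => ltac:(by rewrite /= -scalemxAr dotvZr)) z z' y y' t.
rewrite /= in i3 i4.
rewrite !enorm_sq in h1 h3.
have j1 := congr1 (fun r => tau / 2 * r) i1.
have j4 := congr1 (fun r => tau * r) i4.
rewrite /= in j1 j4.
lra.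
Qed.
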